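(* Suppose the Lipschitz assumption holds. Then for each $t\in\mathbb N_T$ there exist constants $K^3_t,K^4_t>0$ such that for every $\gamma\in\mathcal G$ and all $z_1,z_2\in\mathcal I(\mathcal X)$, $$\|\hat f_t(z_1,\gamma)-\hat f_t(z_2,\gamma)\|_\infty\le K^3_t\|z_1-z_2\|_\infty,\qquad |\hat c_t(z_1,\gamma)-\hat c_t(z_2,\gamma)|\le K^4_t\|z_1-z_2\|_\infty.$$
   Context: Let $T\in\mathbb N$, $\mathbb N_T=\{1,\dots,T\}$, $\mathcal X,\mathcal U,\mathcal W$ finite sets, $\mathcal I(\mathcal X)=[0,1]^{\mathcal X}$. For each $t$, let $f_t:\mathcal X\times\mathcal U\times\mathcal W\times\mathcal I(\mathcal X)\to\mathcal X$, let $\mathbb P(w_t=\cdot)$ be a probability law on $\mathcal W$, and $\mathbb P(y|x,u,z)=\sum_w\mathbb 1(f_t(x,u,w,z)=y)\mathbb P(w_t=w)$; let $\ell_t:\mathcal X\times\mathcal U\times\mathcal I(\mathcal X)\to\mathbb R_{\ge0}$. Lipschitz assumption: constants $K^1_t,K^2_t>0$ with $|\mathbb P(y|x,u,z_1)-\mathbb P(y|x,u,z_2)|\le K^1_t\|z_1-z_2\|_\infty$ and $|\ell_t(x,u,z_1)-\ell_t(x,u,z_2)|\le K^2_t\|z_1-z_2\|_\infty$ for all $x,y\in\mathcal X$, $u\in\mathcal U$, $z_1,z_2\in\mathcal I(\mathcal X)$. $\mathcal G$ is the set of all maps $\gamma:\mathcal X\to\mathcal U$. For $z\in\mathcal I(\mathcal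 X)$: $\hat f_t(z,\gamma)(y)=\sum_{x\in\mathcal X}z(x)\mathbb P(y|x,\gamma(x),z)$, $y\in\mathcal X$, and $\hat c_t(z,\gamma)=\sum_x z(x)\ell_t(x,\gamma(x),z)$. *)

(* Defs.v *)
From mathcomp Require Import all_boot all_order all_algebra.
From mathcomp Require Import reals.
Set Implicit Arguments. Unset Strict Implicit. Unset Printing Implicit Defensive.
Import Order.TTheory GRing.Theory Num.Theory.
Local Open Scope ring_scope.

Section Defs.
Variables (R : realType) (X U W : finType).

Definition inI (z : X -> R) : Prop := forall x, 0 <= z x <= 1.

(* sup norm on R^X (X finite); equals 0 when X is empty *)
Definition supnorm (z : X -> R) : R := \big[Num.max/0]_(x : X) `|z x|.

Definition prob_law (p : W -> R) : Prop :=
  (forall w, 0 <= p w) /\ \sum_(w : W) p w = 1.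

Definition trans (f : nat -> X -> U -> W -> (X -> R) -> X) (pw : nat -> W -> R)
  (t : nat) (y x : X) (u : U) (z : X -> R) : R :=
  \sum_(w : W) (f t x u w z == y)%:R * pw t w.

Definition fhat (f : nat -> X -> U -> W -> (X -> R) -> X) (pw : nat -> W -> R)
  (t : nat) (z : X -> R) (g : X -> U) (y : X) : R :=
  \sum_(x : X) z x * trans f pw t y x (g x) z.

Definition chat (l : nat -> X -> U -> (X -> R) -> R)
  (t : nat) (z : X -> R) (g : X -> U) : R :=
  \sum_(x : X) z x * l t x (g x) z.

Definition lipschitz_assumption (T : nat)
  (f : nat -> X -> U -> W -> (X -> R) -> X) (pw : nat -> W -> R)
  (l : nat -> X -> U -> (X -> R) -> R) : Prop :=
  forall t : nat, (1 <= t <= T)%N ->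
    exists K1 K2 : R, 0 < K1 /\ 0 < K2 /\
      forall (x y : X) (u : U) (z1 z2 : X -> R), inI z1 -> inI z2 ->
        `|trans f pw t y x u z1 - trans f pw t y x u z2|
          <= K1 * supnorm (fun x' => z1 x' - z2 x') /\
        `|l t x u z1 - l t x u z2| <= K2 * supnorm (fun x' => z1 x' - z2 x').
End Defs.

(* Main.v *)
Require Import Defs.
From mathcomp Require Import all_boot all_order all_algebra.
From mathcomp Require Import reals.
From mathcomp Require Import ring lra.
Import Order.TTheory GRing.Theory Num.Theory.
Local Open Scope ring_scope.

Section Aux.
Variables (R : realType) (X : finType).

Lemma bigmax_seq_ge (F : X -> R) (r : seq X) x :
  x \in r -> F x <= \big[Num.max/0]_(i <- r) F i.
Proof.
elim: r => [//|a r IH]; rewrite inE big_cons => /orP [/eqP ->|H].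
  by rewrite le_max lexx.
by rewrite le_max (IH H) orbT.
Qed.

Lemma supnorm_ge (h : X -> R) x : `|h x| <= supnorm h.
Proof. by rewrite /supnorm; apply: bigmax_seq_ge; rewrite mem_index_enum. Qed.

Lemma supnorm_ge0 (h : X -> R) : 0 <= supnorm h.
Proof.
rewrite /supnorm; apply: (big_ind (fun v => 0 <= v)) => //.
by move=> a b Ha _; rewrite le_max Ha.
Qed.

Lemma supnorm_le (h : X -> R) c : 0 <= c -> (forall y, `|h y| <= c) ->
  supnorm h <= c.
Proof.
move=> c0 H; rewrite /supnorm; apply: (big_ind (fun v => v <= c)) => //.
by move=> a b Ha Hb; rewrite ge_max Ha Hb.
Qed.
End Aux.

Theorem lemma1 (R : realType) (X U W : finType) (T : nat)
  (f : nat -> X -> U -> W -> (X -> R) -> X) (pw : nat -> W -> R)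
  (l : nat -> X -> U -> (X -> R) -> R)
  (Hpw : forall t : nat, (1 <= t <= T)%N -> prob_law (pw t))
  (Hl : forall (t : nat) (x : X) (u : U) (z : X -> R),
          (1 <= t <= T)%N -> inI z -> 0 <= l t x u z)
  (Hlip : lipschitz_assumption T f pw l) :
  forall t : nat, (1 <= t <= T)%N ->
    exists K3 K4 : R, 0 < K3 /\ 0 < K4 /\
      forall (g : X -> U) (z1 z2 : X -> R), inI z1 -> inI z2 ->
        supnorm (fun y => fhat f pw t z1 g y - fhat f pw t z2 g y)
          <= K3 * supnorm (fun x => z1 x - z2 x) /\
        `|chat l t z1 g - chat l t z2 g|
          <= K4 * supnorm (fun x => z1 x - z2 x).
Proof.
move=> t Ht.
have [K1 [K2 [K1p [K2p HL]]]] := Hlip t Ht.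
have [pw0 pw1] := Hpw t Ht.
set M := \sum_(x : X) \sum_(u : U) l t x u (fun=> 0).
have I0 : inI (fun _ : X => (0:R)) by move=> x; rewrite lexx ler01.
have M0 : 0 <= M.
  by apply: sumr_ge0 => x _; apply: sumr_ge0 => u _; apply: Hl.
have lM : forall x u, l t x u (fun=> 0) <= M.
  move=> x u; rewrite /M (bigD1 x) //= (bigD1 u) //= -addrA lerDl.
  apply: addr_ge0; first by apply: sumr_ge0 => v _; apply: Hl.
  by apply: sumr_ge0 => y _; apply: sumr_ge0 => v _; apply: Hl.
have trB : forall y x u z, 0 <= trans f pw t y x u z <= 1.
  move=> y x u z; apply/andP; split.
    by apply: sumr_ge0 => w _; apply: mulr_ge0 => //; apply: ler0n.
  rewrite -pw1; apply: ler_sum => w _.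
  by rewrite ler_piMl //; case: eqP.
have zB : forall z : X -> R, inI z -> forall x, `|z x| <= 1.
  by move=> z Hz x; have /andP[a b] := Hz x; rewrite ger0_norm.
have lB : forall x u z, inI z -> `|l t x u z| <= M + K2.
  move=> x u z Hz; rewrite ger0_norm; last exact: Hl.
  have [_ H2] := HL x x u z (fun=> 0) Hz I0.
  have := ler_norm (l t x u z - l t x u (fun=> 0)) => H3.
  have H4 := le_trans H3 H2.
  have H5 : supnorm (fun x' => z x' - (fun=> 0) x') <= 1.
    by apply: supnorm_le => // y; rewrite subr0; apply: zB.
  have H6 : K2 * supnorm (fun x' => z x' - (fun=> 0) x') <= K2.
    by rewrite -[X in _ <= X]mulr1 ler_pM2l.
  have := lM x u; lra.
set n := (#|X|%:R : R).
have n0 : 0 <= n by apply: ler0n.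
exists (n * (1 + K1) + 1), (n * (M + K2 + K2) + 1).
split; first by apply: ltr_pwDr => //; apply: mulr_ge0 => //; lra.
split; first by apply: ltr_pwDr => //; apply: mulr_ge0 => //; lra.
move=> g z1 z2 H1 H2.
set N := supnorm (fun x => z1 x - z2 x).
have N0 : 0 <= N by apply: supnorm_ge0.
have dN : forall x, `|z1 x - z2 x| <= N.
  by move=> x; exact: (@supnorm_ge R X (fun x => z1 x - z2 x) x).
split.
  apply: supnorm_le; first by apply: mulr_ge0 => //; apply: addr_ge0; [apply: mulr_ge0 => //; lra|].
  move=> y; rewrite /fhat -sumrB.
  set P1 := fun x => trans f pw t y x (g x) z1.
  set P2 := fun x => trans f pw t y x (g x) z2.
  rewrite (eq_bigr (fun x => (z1 x - z2 x) * P1 x + z2 x * (P1 x - P2 x))); last first.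
    by move=> x _; rewrite /P1 /P2; ring.
  apply: le_trans (ler_norm_sum _ _ _) _.
  apply: (@le_trans _ _ (\sum_(x : X) (N + K1 * N))).
    apply: ler_sum => x _; apply: le_trans (ler_normD _ _) _.
    apply: lerD; rewrite normrM.
      have /andP[a b] := trB y x (g x) z1.
      rewrite (ger0_norm a); rewrite -[N]mulr1; apply: ler_pM => //.
    have [H _] := HL x y (g x) z1 z2 H1 H2.
    rewrite -[K1 * N]mul1r; apply: ler_pM => //; exact: zB.
  rewrite sumr_const -/n -mulr_natl -/n.
  have : 0 <= n * K1 * N by apply: mulr_ge0 => //; apply: mulr_ge0 => //; lra.
  nra.
rewrite /chat -sumrB.
set L1 := fun x => l t x (g x) z1.
set L2 := fun x => l t x (g x) z2.
rewrite (eq_bigr (fun x => (z1 x - z2 x) * L1 x + z2 x * (L1 x - L2 x))); last first.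
  by move=> x _; rewrite /L1 /L2; ring.
apply: le_trans (ler_norm_sum _ _ _) _.
apply: (@le_trans _ _ (\sum_(x : X) (N * (M + K2) + K2 * N))).
  apply: ler_sum => x _; apply: le_trans (ler_normD _ _) _.
  apply: lerD; rewrite normrM.
    by apply: ler_pM => //; apply: lB.
  have [_ H] := HL x x (g x) z1 z2 H1 H2.
  rewrite -[K2 * N]mul1r; apply: ler_pM => //; exact: zB.
rewrite sumr_const -mulr_natl -/n.
have : 0 <= n * (M + K2 + K2) * N.
  by apply: mulr_ge0 => //; apply: mulr_ge0 => //; lra.
nra.
Qed.
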